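(* Let $(g,\gamma)$ be a construction pair on an abelian group $(X,+)$ and let $r=r(g,\gamma)$. If the order $|g|$ of the permutation $g$ is finite, then $r$ divides $3|g|$. If moreover $\mathrm{Rad}(\gamma)$ contains no elements of order $3$, then $r$ divides $|g|$.
   Context: A map $\gamma:X\times X\to X$ is symmetric if $\gamma(x,y)=\gamma(y,x)$, alternating if $\gamma(x,x)=0$, biadditive if additive in each argument; $\mathrm{Rad}(\gamma)=\{x\in X:\gamma(x,y)=0\ \forall y\in X\}$. A construction pair on $(X,+)$ is a pair $(g,\gamma)$ with $g$ a permutation of $X$ and $\gamma$ symmetric, alternating, biadditive, such that for all $x,y,z\in X$: (C1) $g^{-1}(g(x)+g(y))=x+y+\gamma(x,y)+g^{-1}(\gamma(x,y))+g^{-2}(\gamma(x,y))$; (C2) $\gamma(\gamma(x,y),z)=0$; (C3) $g^{-1}(\gamma(x,y))=\gamma(g(x),y)$. $r(g,\gamma)$ is the least positive integer $r$ such that $\sum_{0\le k<r}g^k(x)\in\mathrm{Rad}(\gamma)$ for all $x\in X$, or $\infty$ if none exists. *)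

(* Defs.v *)
From mathcomp Require Import all_boot all_algebra.
Set Implicit Arguments. Unset Strict Implicit. Unset Printing Implicit Defensive.
Import GRing.Theory.
Local Open Scope ring_scope.

(* A permutation of X is given by a map g together with its two-sided
   inverse ginv (the inverse of a bijection is unique). *)
Definition is_perm_pair (X : Type) (g ginv : X -> X) : Prop :=
  cancel g ginv /\ cancel ginv g.

Definition symmetric_map (X : zmodType) (gam : X -> X -> X) : Prop :=
  forall x y, gam x y = gam y x.

Definition alternating_map (X : zmodType) (gam : X -> X -> X) : Prop :=
  forall x, gam x x = 0.

Definition biadditive (X : zmodType) (gam : X -> X -> X) : Prop :=
  (forall x y z, gam (x + y) z = gam x z + gam y z) /\
  (forall x y z, gam x (y + z) = gam x y + gam x z).

Definition in_Rad (X : zmodType) (gam : X -> X -> X) (x : X) : Prop :=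
  forall y, gam x y = 0.

Definition construction_pair (X : zmodType) (g ginv : X -> X)
  (gam : X -> X -> X) : Prop :=
  is_perm_pair g ginv /\ symmetric_map gam /\ alternating_map gam /\
      biadditive gam /\
      (forall x y, ginv (g x + g y) =
         x + y + gam x y + ginv (gam x y) + ginv (ginv (gam x y))) /\
      (forall x y z, gam (gam x y) z = 0) /\
      (forall x y, ginv (gam x y) = gam (g x) y).

Definition perm_order (X : Type) (g : X -> X) (n : nat) : Prop :=
  (0 < n)%N /\ (forall x, iter n g x = x) /\
  (forall m, (0 < m)%N -> (forall x, iter m g x = x) -> (n <= m)%N).

Definition rad_sum_prop (X : zmodType) (g : X -> X) (gam : X -> X -> X)
  (r : nat) : Prop :=
  forall x, in_Rad gam (\sum_(k < r) iter k g x).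

Definition is_r (X : zmodType) (g : X -> X) (gam : X -> X -> X)
  (r : nat) : Prop :=
  (0 < r)%N /\ rad_sum_prop g gam r /\
  (forall m, (0 < m)%N -> rad_sum_prop g gam m -> (r <= m)%N).

Definition has_order3 (X : zmodType) (x : X) : Prop :=
  x != 0 /\ x *+ 3 = 0.

(* Main.v *)
Require Import Defs.
From mathcomp Require Import all_boot all_algebra.
From Stdlib Require Import Classical.
From mathcomp Require Import zify.
Set Implicit Arguments. Unset Strict Implicit. Unset Printing Implicit Defensive.
Import GRing.Theory.
Local Open Scope ring_scope.

Lemma gam0l (X : zmodType) (gam : X -> X -> X) : biadditive gam -> forall y, gam 0 y = 0.
Proof. move=> [Hl _] y; have : gam 0 y + gam 0 y = gam 0 y + 0 by rewrite addr0 -Hl addr0.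
by move/addrI. Qed.

Lemma gam0r (X : zmodType) (gam : X -> X -> X) : biadditive gam -> forall y, gam y 0 = 0.
Proof. move=> [_ Hr] y; have : gam y 0 + gam y 0 = gam y 0 + 0 by rewrite addr0 -Hr addr0.
by move/addrI. Qed.

Lemma gamNl (X : zmodType) (gam : X -> X -> X) : biadditive gam -> forall x y, gam (- x) y = - gam x y.
Proof. move=> B x y; apply/eqP; by rewrite -addr_eq0 -B.1 addNr gam0l. Qed.

Lemma gam_suml (X : zmodType) (gam : X -> X -> X) : biadditive gam ->
  forall m (F : 'I_m -> X) y, gam (\sum_(k < m) F k) y = \sum_(k < m) gam (F k) y.
Proof. move=> B; elim=> [|m IH] F y; first by rewrite !big_ord0 gam0l.
by rewrite !big_ord_recr /= B.1 IH. Qed.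

Lemma Rad_add (X : zmodType) (gam : X -> X -> X) : biadditive gam ->
  forall u v, in_Rad gam u -> in_Rad gam v -> in_Rad gam (u + v).
Proof. move=> B u v hu hv y; by rewrite B.1 hu hv addr0. Qed.

Lemma Rad_opp (X : zmodType) (gam : X -> X -> X) : biadditive gam ->
  forall u, in_Rad gam u -> in_Rad gam (- u).
Proof. move=> B u hu y; by rewrite gamNl // hu oppr0. Qed.

Lemma ginv0 (X : zmodType) g ginv (gam : X -> X -> X) :
  construction_pair g ginv gam -> ginv 0 = 0.
Proof. move=> [P [S [A [B [C1 [C2 C3]]]]]].
by have := C3 0 0; rewrite gam0l // gam0r. Qed.

Lemma g0 (X : zmodType) g ginv (gam : X -> X -> X) :
  construction_pair g ginv gam -> g 0 = 0.
Proof. move=> H; rewrite -{1}(ginv0 H); case: H => [[c1 c2] _]; by rewrite c2. Qed.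

Lemma gaddR (X : zmodType) g ginv (gam : X -> X -> X) :
  construction_pair g ginv gam -> forall u v, in_Rad gam u -> g (u + v) = g u + g v.
Proof. move=> H u v hu; have h0 := ginv0 H.
case: H => [[c1 c2] [S [A [B [C1 [C2 C3]]]]]].
have := C1 u v; rewrite hu h0 h0 !addr0 => <-; by rewrite c2. Qed.

Lemma gR (X : zmodType) g ginv (gam : X -> X -> X) :
  construction_pair g ginv gam -> forall u, in_Rad gam u -> in_Rad gam (g u).
Proof. move=> H u hu y; have h0 := ginv0 H.
case: H => [[c1 c2] [S [A [B [C1 [C2 C3]]]]]].
by rewrite -C3 hu. Qed.

Lemma ginvR (X : zmodType) g ginv (gam : X -> X -> X) :
  construction_pair g ginv gam -> forall u, in_Rad gam u -> in_Rad gam (ginv u).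
Proof. move=> H u hu y; have h0 := g0 H.
case: H => [[c1 c2] [S [A [B [C1 [C2 C3]]]]]].
have := C3 (ginv u) y; rewrite c2 hu => e.
by rewrite -[gam _ _]c2 e h0. Qed.

Lemma gimR (X : zmodType) g ginv (gam : X -> X -> X) :
  construction_pair g ginv gam -> forall a b, in_Rad gam (gam a b).
Proof. by move=> [_ [_ [_ [_ [_ [C2 _]]]]]] a b y. Qed.

Lemma gN (X : zmodType) g ginv (gam : X -> X -> X) :
  construction_pair g ginv gam -> forall u, in_Rad gam u -> g (- u) = - g u.
Proof. move=> H u hu; apply/eqP; rewrite -addr_eq0 -(gaddR H) ?addNr ?(g0 H) //.
by apply: Rad_opp hu; case: H => [_ [_ [_ [B _]]]]. Qed.

Lemma gadd (X : zmodType) g ginv (gam : X -> X -> X) :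
  construction_pair g ginv gam -> forall a b,
  g (a + b) = g a + g b - (g (gam a b) + gam a b + ginv (gam a b)).
Proof. move=> H a b.
have R1 := gimR H a b. have R2 := ginvR H R1. have R3 := ginvR H R2.
have B : biadditive gam by case: H => [_ [_ [_ [B _]]]].
have RR : in_Rad gam (gam a b + ginv (gam a b) + ginv (ginv (gam a b))).
  by apply: Rad_add => //; apply: Rad_add.
have e : g a + g b = g (gam a b + ginv (gam a b) + ginv (ginv (gam a b)) + (a + b)).
  case: (H) => [[c1 c2] [S [A [_ [C1 _]]]]].
  by rewrite -[LHS]c2 C1; congr g; rewrite [RHS]addrC !addrA.
rewrite e (gaddR H _ RR) (gaddR H _ (Rad_add B R1 R2)) (gaddR H _ R1).
have c2 : cancel ginv g by case: H => [[]].
by rewrite !c2 [_ + g (a + b)]addrC addrK.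
Qed.

Definition Ssum (X : zmodType) (g : X -> X) (k : nat) (a : X) : X :=
  \sum_(j < k) iter j g a.

Lemma iterR (X : zmodType) g ginv (gam : X -> X -> X) :
  construction_pair g ginv gam -> forall k u, in_Rad gam u -> in_Rad gam (iter k g u).
Proof. move=> H; elim=> [|k IH] u hu //=; apply: (gR H); exact: IH. Qed.

Lemma iter_addR (X : zmodType) g ginv (gam : X -> X -> X) :
  construction_pair g ginv gam -> forall k u v, in_Rad gam u ->
  iter k g (u + v) = iter k g u + iter k g v.
Proof. move=> H; elim=> [|k IH] u v hu //=; rewrite IH // (gaddR H) //.
exact: (iterR H). Qed.

Lemma iter_cancel (X : Type) (g ginv : X -> X) : cancel ginv g ->
  forall k z, iter k g (iter k ginv z) = z.
Proof. move=> c; elim=> [|k IH] z //; by rewrite [iter k.+1 ginv z]iterSr iterS IH c. Qed.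

Lemma gam_iter (X : zmodType) g ginv (gam : X -> X -> X) :
  construction_pair g ginv gam -> forall k u v,
  gam (iter k g u) v = iter k ginv (gam u v).
Proof. move=> H; case: (H) => [_ [S [_ [_ [_ [_ C3]]]]]].
elim=> [|k IH] u v //=; by rewrite -C3 IH. Qed.

Lemma gam_swap1 (X : zmodType) g ginv (gam : X -> X -> X) :
  construction_pair g ginv gam -> forall u w, gam u (g w) = gam (g u) w.
Proof. move=> H; case: (H) => [_ [S [_ [_ [_ [_ C3]]]]]] u w.
by rewrite S -C3 S C3. Qed.

Lemma gam_swap (X : zmodType) g ginv (gam : X -> X -> X) :
  construction_pair g ginv gam -> forall k u v,
  gam u (iter k g v) = gam (iter k g u) v.
Proof. move=> H; elim=> [|k IH] u v //.
by rewrite iterS (gam_swap1 H) IH -iterSr. Qed.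

Lemma iter_addR' (X : zmodType) g ginv (gam : X -> X -> X) :
  construction_pair g ginv gam -> forall k u v, in_Rad gam v ->
  iter k g (u + v) = iter k g u + iter k g v.
Proof. move=> H k u v hv; by rewrite addrC (iter_addR H) // addrC. Qed.

Lemma key_i (X : zmodType) g ginv (gam : X -> X -> X) :
  construction_pair g ginv gam -> forall m i a b,
  gam (iter (3 * m + i) g a) b = iter (m + i) ginv (gam (iter m g a) (iter m g b)).
Proof. move=> H m i a b.
have -> : (3 * m + i = m + (m + i) + m)%N by lia.
rewrite !iterD -(gam_swap H m) (gam_iter H). by rewrite (gam_iter H).
Qed.

Lemma claim (X : zmodType) g ginv (gam : X -> X -> X) :
  construction_pair g ginv gam -> forall m a b,
  iter m g (a + b) = iter m g a + iter m g b - iter m g (gam (Ssum g (3 * m) a) b).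
Proof. move=> H.
have B : biadditive gam by case: H => [_ [_ [_ [B _]]]].
have c2 : cancel ginv g by case: H => [[]].
elim=> [|m IH] a b.
  by rewrite /= /Ssum big_ord0 gam0l // subr0.
rewrite iterS IH.
set A := iter m g a; set Bb := iter m g b; set e := gam (Ssum g (3 * m) a) b.
have Re : in_Rad gam (iter m g e) by apply: (iterR H); apply: (gimR H).
rewrite (addrC _ (- _)) (gaddR H _ (Rad_opp B Re)) (gN H Re) (gadd H).
have -> : Ssum g (3 * m.+1) a = Ssum g (3 * m) a + iter (3 * m + 0) g a
     + iter (3 * m + 1) g a + iter (3 * m + 2) g a.
  rewrite /Ssum; have -> : (3 * m.+1 = (3 * m).+3)%N by rewrite mulnS.
  by rewrite !big_ord_recr /= addn0 addn1 addn2.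
rewrite !B.1 !(iter_addR' H _ _ (gimR H _ _)) !(key_i H) -/A -/Bb.
set c := gam A Bb.
have -> : iter m.+1 g (iter (m + 0) ginv c) = g c by rewrite addn0 iterS (iter_cancel c2).
have -> : iter m.+1 g (iter (m + 1) ginv c) = c by rewrite addn1 (iter_cancel c2).
have -> : iter m.+1 g (iter (m + 2) ginv c) = ginv c.
  by rewrite addn2 [iter m.+2 ginv c]iterSr (iter_cancel c2).
rewrite !iterS -/A -/Bb -/e.
set x := g (iter m g e); set p := g A + g Bb.
rewrite addrCA; congr (_ + _).
by rewrite !opprD !addrA.
Qed.

Lemma Ssum_split (X : zmodType) (g : X -> X) n m x :
  Ssum g (n + m) x = Ssum g n x + Ssum g m (iter n g x).
Proof. rewrite /Ssum big_split_ord /=; congr (_ + _).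
by apply: eq_bigr => i _; rewrite addnC iterD. Qed.

Lemma rad3n (X : zmodType) g ginv (gam : X -> X -> X) n :
  construction_pair g ginv gam -> perm_order g n -> rad_sum_prop g gam (3 * n).
Proof. move=> H [_ [hn _]] x y.
have := claim H n x y; rewrite !hn => e.
have : (x + y) - gam (Ssum g (3 * n) x) y = (x + y) - 0 by rewrite subr0 -e.
by move/addrI/oppr_inj. Qed.

Lemma rad_sub (X : zmodType) g ginv (gam : X -> X -> X) r m :
  construction_pair g ginv gam -> rad_sum_prop g gam r -> rad_sum_prop g gam m ->
  (r < m)%N -> rad_sum_prop g gam (m - r).
Proof. move=> H hr hm lt w y.
have c2 : cancel ginv g by case: H => [[]].
have B : biadditive gam by case: H => [_ [_ [_ [B _]]]].
have := hm (iter r ginv w) y.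
rewrite -[in X in X -> _](subnKC (ltnW lt)).
change (gam (Ssum g (r + (m - r)) (iter r ginv w)) y = 0 -> gam (Ssum g (m - r) w) y = 0).
rewrite Ssum_split B.1 (iter_cancel c2).
have := hr (iter r ginv w) y; rewrite /Ssum => ->; by rewrite add0r.
Qed.

Lemma r_dvd (X : zmodType) g ginv (gam : X -> X -> X) r :
  construction_pair g ginv gam -> is_r g gam r -> forall m, (0 < m)%N ->
  rad_sum_prop g gam m -> (r %| m)%N.
Proof. move=> H [r0 [hr rmin]] m.
elim: m {-2}m (leqnn m) => [|N IH] m hmN m0 hm; first by move: m0; rewrite ltnNge hmN.
case: (ltngtP r m) => c.
- have h := rad_sub H hr hm c.
  have : (r %| m - r)%N.
    apply: IH h; [lia | lia].
  by move=> h1; rewrite -(subnK (ltnW c)) (dvdn_addr _ h1) dvdnn.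
- by have := rmin m m0 hm; rewrite leqNgt c.
- by rewrite c dvdnn.
Qed.

Lemma ex_min (P : nat -> Prop) : (exists m, (0 < m)%N /\ P m) ->
  exists r, (0 < r)%N /\ P r /\ (forall m, (0 < m)%N -> P m -> (r <= m)%N).
Proof.
move=> [m0 [h0 hP]].
suff: forall N, (exists m, (m <= N)%N /\ (0 < m)%N /\ P m) ->
  exists r, (0 < r)%N /\ P r /\ (forall m, (0 < m)%N -> P m -> (r <= m)%N).
  by apply; exists m0; split.
elim=> [|N IH] [m [hm [hm0 hPm]]]; first by lia.
case: (classic (exists m, (m <= N)%N /\ (0 < m)%N /\ P m)) => [E|NE]; first exact: IH.
exists m; split=> //; split=> // m' hm' hPm'.
case: (leqP m' N) => c; last by lia.
by exfalso; apply: NE; exists m'.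
Qed.

Theorem mainTheorem3 (X : zmodType) (g ginv : X -> X) (gam : X -> X -> X)
  (n : nat) :
  construction_pair g ginv gam ->
  perm_order g n ->
  (exists r, is_r g gam r /\ (r %| 3 * n)%N) /\
  ((forall x, in_Rad gam x -> ~ has_order3 x) ->
   exists r, is_r g gam r /\ (r %| n)%N).
Proof.
move=> H hp.
have n0 : (0 < n)%N by case: hp.
have h3 := rad3n H hp.
have [r hr] : exists r, is_r g gam r.
  by apply: (ex_min (P := rad_sum_prop g gam)); exists (3 * n)%N; split => //; lia.
split; first by exists r; split => //; apply: (r_dvd H hr) => //; lia.
move=> no3; exists r; split => //; apply: (r_dvd H hr) => // x y.
have B : biadditive gam by case: H => [_ [_ [_ [B _]]]].
set t := gam (Ssum g n x) y.
have e : t *+ 3 = 0.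
  have := h3 x y; change (gam (Ssum g (3 * n) x) y = 0 -> t *+ 3 = 0).
  have -> : (3 * n = n + (n + n))%N by lia.
  case: hp => [_ [hn _]].
  by rewrite !Ssum_split !hn !B.1 mulrS mulr2n.
case: (eqVneq t 0) => // nz.
by exfalso; apply: (no3 t (gimR H _ _)); split.
Qed.
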